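(* Let $I,J\subset\mathbb{R}$ be intervals, $f:I\times J\to I$, $f_\lambda(x)=f(x,\lambda)$, $\lambda_0\in J$, $f_0=f_{\lambda_0}$. Assume: (H1) $f$ is a $C^1$ family of $C^2$ interval maps; (H2) $f_0$ is not constant on any interval; (H3) $f_0$ has at most one of: (a) a non-hyperbolic fixed point or periodic orbit, which as $\lambda$ varies is a generic codimension-one period-doubling or saddle-node bifurcation; (b) one critical point which constitutes a tangency between stable and unstable manifolds of fixed points or periodic orbits, generic in that as $\lambda$ varies through $\lambda_0$ the critical point moves from one side of the periodic point to the other; (H4) for each $\lambda$, $x_\lambda$ is a repelling fixed point of $f_\lambda$, $x_0:=x_{\lambda_0}$, and $y$ is a homoclinic point to $x_0$ for $f_0$; (H5) the homoclinic orbit containing $y$ at $\lambda_0$ contains only one critical point of $f_0$; (H6) $w$ is a homoclinic tangency point to $x_0$ for $f_0$ contained in at least one homoclinic orbit $(z_{-k})_{k\ge0}$, with $w=z_{-L}$. If $w\in U_{right}\cap U_{left}$, then $(w,\lambda_0)$ is not a chain explosion point.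
   Context: An $\epsilon$-chain for $g$ from $x$ to $y$: $z_0=x,\dots,z_N=y$ with $|g(z_{n-1})-z_n|<\epsilon$; $x$ is chain recurrent if for every $\epsilon>0$ there is such a chain from $x$ to itself with $N>0$. $(x,\lambda_0)$ is a chain explosion point if $x$ is chain recurrent for $f_{\lambda_0}$ but some neighborhood of $x$ contains no chain recurrent point of $f_\lambda$ for all $\lambda$ on one side of $\lambda_0$. For a repelling fixed point $x_0$, $y$ is homoclinic to $x_0$ if $y$ lies in the unstable manifold of $x_0$ and $f_0^K(y)=x_0$ for some $K>0$. A homoclinic orbit is a sequence $(z_{-k})_{k\ge0}$ with $z_0=x_0$, $z_{-K}=y$ for some $K$, $f_0(z_{-k})=z_{-k+1}$, $z_{-k}\to x_0$; $w=z_{-L}$ is a homoclinic tangency point if the graph of $f_0$ has a horizontal tangent at $w$. The sets $U_{left},U_{right}$ are defined when $f_0'(x_0)>0$: the local left and right branches of the unstable manifold of $x_0$ (small one-sided neighborhoods of $x_0$) are disjoint, and $U_{left}$, $U_{right}$ are the unions of all forward images under $f_0$ of the local left and right branches, respectively. *)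

(* Defs.v *)
From Stdlib Require Import Reals Lra.
Open Scope R_scope.

Definition is_interval (I : R -> Prop) : Prop :=
  forall a b x, I a -> I b -> a <= x <= b -> I x.

Definition nondegenerate (I : R -> Prop) : Prop :=
  exists a b, a < b /\ I a /\ I b.

Definition derive_within (D : R -> Prop) (g : R -> R) (x l : R) : Prop :=
  forall eps, 0 < eps -> exists delta, 0 < delta /\
    forall y, D y -> y <> x -> Rabs (y - x) < delta ->
      Rabs ((g y - g x) / (y - x) - l) < eps.

Definition continuous_within (D : R -> Prop) (g : R -> R) (x : R) : Prop :=
  forall eps, 0 < eps -> exists delta, 0 < delta /\
    forall y, D y -> Rabs (y - x) < delta -> Rabs (g y - g x) < eps.

Definition continuous2_within (I J : R -> Prop) (h : R -> R -> R) (x l : R) : Prop :=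
  forall eps, 0 < eps -> exists delta, 0 < delta /\
    forall y m, I y -> J m -> Rabs (y - x) < delta -> Rabs (m - l) < delta ->
      Rabs (h y m - h x l) < eps.

Definition second_derive_within (D : R -> Prop) (g : R -> R) (x l : R) : Prop :=
  exists g1, (forall y, D y -> derive_within D g y (g1 y)) /\ derive_within D g1 x l.

Definition third_derive_within (D : R -> Prop) (g : R -> R) (x l : R) : Prop :=
  exists g1 g2, (forall y, D y -> derive_within D g y (g1 y)) /\
    (forall y, D y -> derive_within D g1 y (g2 y)) /\ derive_within D g2 x l.

(* (H1): f is a C^1 family (jointly C^1 in (x,lambda)) of C^2 interval maps.
   fx = d f / dx, fxx = d^2 f / dx^2, fl = d f / d lambda. *)
Definition C1_family_of_C2_maps (I J : R -> Prop) (f fx fxx fl : R -> R -> R) : Prop :=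
  (forall x l, I x -> J l -> derive_within I (fun u => f u l) x (fx x l)) /\
  (forall x l, I x -> J l -> derive_within J (fun m => f x m) l (fl x l)) /\
  (forall x l, I x -> J l -> continuous2_within I J fx x l) /\
  (forall x l, I x -> J l -> continuous2_within I J fl x l) /\
  (forall x l, I x -> J l -> derive_within I (fun u => fx u l) x (fxx x l)) /\
  (forall x l, I x -> J l -> continuous_within I (fun u => fxx u l) x).

Definition not_constant_on_any_interval (I : R -> Prop) (g : R -> R) : Prop :=
  forall a b, a < b -> (forall x, a <= x <= b -> I x) ->
    exists x1 x2, a <= x1 <= b /\ a <= x2 <= b /\ g x1 <> g x2.

Definition periodic_pt (I : R -> Prop) (g : R -> R) (n : nat) (p : R) : Prop :=
  I p /\ (0 < n)%nat /\ Nat.iter n g p = p /\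
  forall k, (0 < k < n)%nat -> Nat.iter k g p <> p.

(* multiplier (g^n)'(x) = prod_{k<n} g'(g^k x) *)
Fixpoint multiplier (g' g : R -> R) (n : nat) (x : R) : R :=
  match n with
  | O => 1
  | S k => g' (Nat.iter k g x) * multiplier g' g k x
  end.

Definition hyperbolic (g' g : R -> R) (n : nat) (p : R) : Prop :=
  Rabs (multiplier g' g n p) <> 1.

Definition repelling_fixed_pt (I : R -> Prop) (g g' : R -> R) (x : R) : Prop :=
  I x /\ g x = x /\ 1 < Rabs (g' x).

Definition unstable_mfd (I : R -> Prop) (g : R -> R) (q y : R) : Prop :=
  forall delta, 0 < delta -> exists (n : nat) u,
    I u /\ Rabs (u - q) < delta /\ Nat.iter n g u = y.

Section H3defs.
Variables (I J : R -> Prop) (f fx : R -> R -> R) (l0 : R).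

Let fl_ (l : R) := fun u => f u l.
Let fxl_ (l : R) := fun u => fx u l.

Definition generic_saddle_node (n : nat) (p : R) : Prop :=
  multiplier (fxl_ l0) (fl_ l0) n p = 1 /\
  (exists s, second_derive_within I (Nat.iter n (fl_ l0)) p s /\ s <> 0) /\
  (exists d, derive_within J (fun l => Nat.iter n (fl_ l) p) l0 d /\ d <> 0).

Definition generic_period_doubling (n : nat) (p : R) : Prop :=
  multiplier (fxl_ l0) (fl_ l0) n p = -1 /\
  (exists (q : R -> R) eps, 0 < eps /\ q l0 = p /\
     (forall l, J l -> Rabs (l - l0) < eps -> I (q l) /\ Nat.iter n (fl_ l) (q l) = q l) /\
     continuous_within J q l0 /\
     (exists d, derive_within J (fun l => multiplier (fxl_ l) (fl_ l) n (q l)) l0 d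
                /\ d <> 0)) /\
  (exists t, third_derive_within I (Nat.iter (2 * n) (fl_ l0)) p t /\ t <> 0).

(* critical point of f_0 constituting a tangency between the unstable manifold
   of a periodic point q1 and the stable manifold of a periodic point q2 *)
Definition tangency_crit (c : R) : Prop :=
  I c /\ fx c l0 = 0 /\
  (exists n1 q1, periodic_pt I (fl_ l0) n1 q1 /\ unstable_mfd I (fl_ l0) q1 c) /\
  (exists n2 q2 (m : nat), periodic_pt I (fl_ l0) n2 q2 /\ (1 <= m)%nat /\
     Nat.iter m (fl_ l0) c = q2).

(* genericity: as lambda passes through l0, the (continued) critical point,
   pushed forward m times, moves from one side of the (continued) periodic
   point to the other *)
Definition generic_tangency (c : R) : Prop :=
  I c /\ fx c l0 = 0 /\
  exists n1 q1 n2 q2 (m : nat),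
    periodic_pt I (fl_ l0) n1 q1 /\ unstable_mfd I (fl_ l0) q1 c /\
    periodic_pt I (fl_ l0) n2 q2 /\ (1 <= m)%nat /\ Nat.iter m (fl_ l0) c = q2 /\
    exists (cc qq : R -> R) eps, 0 < eps /\ cc l0 = c /\ qq l0 = q2 /\
      continuous_within J cc l0 /\ continuous_within J qq l0 /\
      (forall l, J l -> Rabs (l - l0) < eps ->
         I (cc l) /\ fx (cc l) l = 0 /\ I (qq l) /\ Nat.iter n2 (fl_ l) (qq l) = qq l) /\
      (((forall l, J l -> l0 - eps < l < l0 -> Nat.iter m (fl_ l) (cc l) < qq l) /\
        (forall l, J l -> l0 < l < l0 + eps -> qq l < Nat.iter m (fl_ l) (cc l))) \/
       ((forall l, J l -> l0 - eps < l < l0 -> qq l < Nat.iter m (fl_ l) (cc l)) /\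
        (forall l, J l -> l0 < l < l0 + eps -> Nat.iter m (fl_ l) (cc l) < qq l))).

Definition all_periodic_hyperbolic : Prop :=
  forall n p, periodic_pt I (fl_ l0) n p -> hyperbolic (fxl_ l0) (fl_ l0) n p.

(* (H3): at most one degeneracy, either (a) or (b), and it is generic *)
Definition H3_condition : Prop :=
  (all_periodic_hyperbolic /\ (forall c, ~ tangency_crit c))
  \/
  ((exists n p, periodic_pt I (fl_ l0) n p /\ ~ hyperbolic (fxl_ l0) (fl_ l0) n p /\
      (generic_saddle_node n p \/ generic_period_doubling n p) /\
      (forall n' p', periodic_pt I (fl_ l0) n' p' -> ~ hyperbolic (fxl_ l0) (fl_ l0) n' p' ->
         exists j : nat, p' = Nat.iter j (fl_ l0) p)) /\
   (forall c, ~ tangency_crit c))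
  \/
  (all_periodic_hyperbolic /\
   exists c, tangency_crit c /\ generic_tangency c /\
     (forall c', tangency_crit c' -> c' = c)).

End H3defs.

Definition homoclinic_pt (I : R -> Prop) (g : R -> R) (x0 y : R) : Prop :=
  unstable_mfd I g x0 y /\ exists K : nat, (0 < K)%nat /\ Nat.iter K g y = x0.

(* z k stands for z_{-k} *)
Definition homoclinic_orbit (I : R -> Prop) (g : R -> R) (x0 : R) (z : nat -> R) : Prop :=
  z O = x0 /\ (exists K : nat, (0 < K)%nat /\ homoclinic_pt I g x0 (z K)) /\
  (forall k, I (z k)) /\ (forall k, g (z (S k)) = z k) /\
  (forall eps, 0 < eps -> exists N : nat, forall k, (N <= k)%nat -> Rabs (z k - x0) < eps).

Definition homoclinic_tangency_pt (I : R -> Prop) (g g' : R -> R) (x0 w : R) : Prop :=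
  exists (z : nat -> R) (L : nat), homoclinic_orbit I g x0 z /\ z L = w /\ g' w = 0.

Definition U_left (I : R -> Prop) (g : R -> R) (x0 w : R) : Prop :=
  forall delta, 0 < delta -> exists (n : nat) u,
    I u /\ x0 - delta < u < x0 /\ Nat.iter n g u = w.

Definition U_right (I : R -> Prop) (g : R -> R) (x0 w : R) : Prop :=
  forall delta, 0 < delta -> exists (n : nat) u,
    I u /\ x0 < u < x0 + delta /\ Nat.iter n g u = w.

Definition eps_chain (I : R -> Prop) (g : R -> R) (eps x y : R) : Prop :=
  exists (N : nat) (z : nat -> R), (0 < N)%nat /\ z O = x /\ z N = y /\
    (forall n, (n <= N)%nat -> I (z n)) /\
    (forall n, (1 <= n <= N)%nat -> Rabs (g (z (n - 1)%nat) - z n) < eps).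

Definition chain_recurrent (I : R -> Prop) (g : R -> R) (x : R) : Prop :=
  I x /\ forall eps, 0 < eps -> eps_chain I g eps x x.

Definition chain_explosion_point (I J : R -> Prop) (f : R -> R -> R) (l0 x : R) : Prop :=
  chain_recurrent I (fun u => f u l0) x /\
  exists delta eps, 0 < delta /\ 0 < eps /\
    ((forall l, J l -> l0 < l < l0 + eps -> forall u, Rabs (u - x) < delta ->
        ~ chain_recurrent I (fun v => f v l) u) \/
     (forall l, J l -> l0 - eps < l < l0 -> forall u, Rabs (u - x) < delta ->
        ~ chain_recurrent I (fun v => f v l) u)).

(* Main.v *)
Require Import Defs.
From Stdlib Require Import Reals Lra Lia.
Open Scope R_scope.

Lemma cont_of_deriv D g x l : derive_within D g x l -> continuous_within D g x.
Proof.
  intros Hd eps He.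
  destruct (Hd 1 Rlt_0_1) as [d0 [Hd0 H0]].
  exists (Rmin d0 (eps / (Rabs l + 1))). split.
  { apply Rmin_pos; auto. apply Rdiv_lt_0_compat; auto. pose proof (Rabs_pos l); lra. }
  intros y Dy Hy.
  destruct (Req_dec y x) as [->|Hne].
  { replace (g x - g x) with 0 by ring. rewrite Rabs_R0; auto. }
  assert (Hy1 : Rabs (y - x) < d0) by (eapply Rlt_le_trans; [apply Hy| apply Rmin_l]).
  assert (Hy2 : Rabs (y - x) < eps / (Rabs l + 1)) by (eapply Rlt_le_trans; [apply Hy| apply Rmin_r]).
  specialize (H0 y Dy Hne Hy1).
  set (q := (g y - g x) / (y - x)) in *.
  assert (Hq : g y - g x = q * (y - x)) by (unfold q; field; lra).
  rewrite Hq, Rabs_mult.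
  assert (Rabs q < Rabs l + 1).
  { replace q with ((q - l) + l) by ring. pose proof (Rabs_triang (q - l) l). lra. }
  assert (Hp : 0 < Rabs l + 1) by (pose proof (Rabs_pos l); lra).
  assert (Rabs (y - x) * (Rabs l + 1) < eps).
  { apply Rmult_lt_reg_r with (/ (Rabs l + 1)). apply Rinv_0_lt_compat; auto.
    rewrite Rmult_assoc, Rinv_r by lra. rewrite Rmult_1_r. exact Hy2. }
  pose proof (Rabs_pos q). pose proof (Rabs_pos (y - x)). nra.
Qed.

Lemma between_prod p q c : Rmin p q <= c <= Rmax p q -> (p - c) * (q - c) <= 0.
Proof. unfold Rmin, Rmax; destruct (Rle_dec p q); intros; nra. Qed.

Definition clamp lo hi x := Rmax lo (Rmin hi x).

Lemma clamp_lip lo hi x y : Rabs (clamp lo hi x - clamp lo hi y) <= Rabs (x - y).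
Proof.
  unfold clamp, Rmax, Rmin.
  repeat destruct Rle_dec; unfold Rabs; repeat destruct Rcase_abs; lra.
Qed.

Lemma clamp_in lo hi x : lo <= hi -> lo <= clamp lo hi x <= hi.
Proof. unfold clamp, Rmax, Rmin. repeat destruct Rle_dec; lra. Qed.

Lemma clamp_id lo hi x : lo <= x <= hi -> clamp lo hi x = x.
Proof. unfold clamp, Rmax, Rmin. repeat destruct Rle_dec; lra. Qed.

Lemma ivt_within (I : R -> Prop) (g : R -> R) :
  is_interval I -> (forall t, I t -> continuous_within I g t) ->
  forall a b c, I a -> I b -> Rmin (g a) (g b) <= c <= Rmax (g a) (g b) ->
  exists s, Rmin a b <= s <= Rmax a b /\ g s = c.
Proof.
  intros HI Hc a b c Ia Ib Hbt.
  set (lo := Rmin a b). set (hi := Rmax a b).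
  assert (Hlh : lo <= hi) by (unfold lo, hi, Rmin, Rmax; destruct Rle_dec; lra).
  assert (Ilo : I lo) by (unfold lo; apply Rmin_case; auto).
  assert (Ihi : I hi) by (unfold hi; apply Rmax_case; auto).
  assert (Icl : forall x, I (clamp lo hi x)).
  { intro x. apply (HI lo hi); auto. apply clamp_in; auto. }
  set (h := fun x => g (clamp lo hi x) - c).
  assert (Hh : continuity h).
  { intro x. unfold continuity_pt, continue_in, limit1_in, limit_in. simpl.
    unfold R_dist. intros eps He.
    destruct (Hc _ (Icl x) eps He) as [d [Hd Hd']].
    exists d. split; auto. intros y [_ Hy].
    unfold h. replace (g (clamp lo hi y) - c - (g (clamp lo hi x) - c))
      with (g (clamp lo hi y) - g (clamp lo hi x)) by ring.
    apply Hd'; auto. eapply Rle_lt_trans; [apply clamp_lip|]. exact Hy. }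
  assert (Hprod : h lo * h hi <= 0).
  { unfold h. rewrite !clamp_id by lra.
    pose proof (between_prod _ _ _ Hbt).
    unfold lo, hi, Rmin, Rmax in *; destruct (Rle_dec a b); nra. }
  destruct (IVT_cor h lo hi Hh Hlh Hprod) as [s [Hs Hs0]].
  exists s. split; auto. unfold h in Hs0. rewrite clamp_id in Hs0 by lra. lra.
Qed.

Lemma iter_in (I : R -> Prop) F : (forall t, I t -> I (F t)) ->
  forall k t, I t -> I (Nat.iter k F t).
Proof. intros HF k; induction k; intros t It; simpl; auto. Qed.

Lemma iter_cont (I : R -> Prop) F : (forall t, I t -> I (F t)) ->
  (forall t, I t -> continuous_within I F t) ->
  forall k t, I t -> continuous_within I (Nat.iter k F) t.
Proof.
  intros HF Hc k; induction k; intros t It eps He; simpl.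
  - exists eps; split; auto.
  - destruct (Hc _ (iter_in I F HF k t It) eps He) as [d1 [Hd1 H1]].
    destruct (IHk t It d1 Hd1) as [d2 [Hd2 H2]].
    exists d2; split; auto. intros y Iy Hy.
    apply H1; auto. apply iter_in; auto.
Qed.

Definition btw a b x := Rmin a b <= x <= Rmax a b.

Lemma nonconst_iter (I : R -> Prop) F : is_interval I ->
  (forall t, I t -> I (F t)) -> (forall t, I t -> continuous_within I F t) ->
  not_constant_on_any_interval I F ->
  forall k a b, a < b -> (forall x, a <= x <= b -> I x) ->
  exists x1 x2, a <= x1 <= b /\ a <= x2 <= b /\ Nat.iter k F x1 <> Nat.iter k F x2.
Proof.
  intros HI HF Hc Hnc k; induction k; intros a b Hab Hin.
  - exists a, b. simpl. repeat split; lra.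
  - destruct (Hnc a b Hab Hin) as [x1 [x2 [H1 [H2 Hne]]]].
    set (c := Rmin (F x1) (F x2)). set (d := Rmax (F x1) (F x2)).
    assert (Hcd : c < d) by (unfold c, d, Rmin, Rmax; destruct Rle_dec; lra).
    assert (Ix1 : I x1) by auto. assert (Ix2 : I x2) by auto.
    assert (Hin' : forall x, c <= x <= d -> I x).
    { intros x Hx. apply (HI c d); auto.
      unfold c; apply Rmin_case; auto. unfold d; apply Rmax_case; auto. }
    destruct (IHk c d Hcd Hin') as [y1 [y2 [Hy1 [Hy2 Hne']]]].
    destruct (ivt_within I F HI Hc x1 x2 y1 Ix1 Ix2 Hy1) as [v1 [Hv1 Ev1]].
    destruct (ivt_within I F HI Hc x1 x2 y2 Ix1 Ix2 Hy2) as [v2 [Hv2 Ev2]].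
    exists v1, v2.
    assert (Rmin x1 x2 >= a /\ Rmax x1 x2 <= b) by (unfold Rmin, Rmax; destruct Rle_dec; lra).
    split; [lra|]. split; [lra|].
    rewrite !Nat.iter_succ_r, Ev1, Ev2. exact Hne'.
Qed.

Lemma core (I : R -> Prop) F : is_interval I ->
  (forall t, I t -> I (F t)) -> (forall t, I t -> continuous_within I F t) ->
  forall (L n : nat) t1 t2 p0 u, I t1 -> I t2 -> I p0 -> I u ->
  btw (Nat.iter L F t1) (Nat.iter L F t2) p0 ->
  btw (Nat.iter L F t1) (Nat.iter L F t2) u ->
  ((Nat.iter n F p0 < Rmin t1 t2 /\ Rmax t1 t2 < Nat.iter n F u) \/
   (Nat.iter n F u < Rmin t1 t2 /\ Rmax t1 t2 < Nat.iter n F p0)) ->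
  exists s, btw t1 t2 s /\ Nat.iter (n + L) F s = s.
Proof.
  intros HI HF Hc L n t1 t2 p0 u I1 I2 Ip Iu Bp Bu Hside.
  pose proof (iter_cont I F HF Hc) as HC.
  destruct (ivt_within I (Nat.iter L F) HI (HC L) t1 t2 p0 I1 I2 Bp) as [a [Ha Ea]].
  destruct (ivt_within I (Nat.iter L F) HI (HC L) t1 t2 u I1 I2 Bu) as [b [Hb Eb]].
  assert (Ia : I a) by (apply (HI (Rmin t1 t2) (Rmax t1 t2)); auto;
     [apply Rmin_case|apply Rmax_case]; auto).
  assert (Ib : I b) by (apply (HI (Rmin t1 t2) (Rmax t1 t2)); auto;
     [apply Rmin_case|apply Rmax_case]; auto).
  set (G := fun x => Nat.iter (n + L) F x - x).
  assert (HG : forall t, I t -> continuous_within I G t).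
  { intros t It eps He. destruct (HC (n+L)%nat t It (eps/2)) as [d [Hd Hd']]; [lra|].
    exists (Rmin d (eps/2)). split. apply Rmin_pos; lra.
    intros y Iy Hy. unfold G.
    assert (Rabs (y - t) < d) by (eapply Rlt_le_trans; [apply Hy|apply Rmin_l]).
    assert (Rabs (y - t) < eps/2) by (eapply Rlt_le_trans; [apply Hy|apply Rmin_r]).
    specialize (Hd' y Iy H).
    replace (Nat.iter (n + L) F y - y - (Nat.iter (n + L) F t - t))
      with ((Nat.iter (n + L) F y - Nat.iter (n + L) F t) - (y - t)) by ring.
    eapply Rle_lt_trans; [apply Rabs_triang|]. rewrite Rabs_Ropp. lra. }
  assert (Ga : G a = Nat.iter n F p0 - a) by (unfold G; rewrite Nat.iter_add, Ea; auto).
  assert (Gb : G b = Nat.iter n F u - b) by (unfold G; rewrite Nat.iter_add, Eb; auto).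
  assert (Hb0 : Rmin (G a) (G b) <= 0 <= Rmax (G a) (G b)).
  { rewrite Ga, Gb. unfold Rmin, Rmax in *. destruct Hside;
    repeat destruct Rle_dec; lra. }
  destruct (ivt_within I G HI HG a b 0 Ia Ib Hb0) as [s [Hs Es]].
  exists s. split.
  - unfold btw, Rmin, Rmax in *. repeat destruct Rle_dec; lra.
  - unfold G in Es. lra.
Qed.

Lemma deriv_interior (D : R -> Prop) g x l : derive_within D g x l ->
  (exists r, 0 < r /\ forall z, Rabs (z - x) < r -> D z) -> derivable_pt_lim g x l.
Proof.
  intros Hd [r [Hr Hball]] eps He.
  destruct (Hd eps He) as [d [Hd0 H]].
  exists (mkposreal _ (Rmin_pos _ _ Hd0 Hr)). intros h Hh Hlt. simpl in Hlt.
  assert (E : x + h - x = h) by ring.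
  assert (Rabs h < d) by (eapply Rlt_le_trans; [apply Hlt|apply Rmin_l]).
  assert (Rabs h < r) by (eapply Rlt_le_trans; [apply Hlt|apply Rmin_r]).
  specialize (H (x + h)). rewrite E in H. apply H; auto.
  apply Hball. rewrite E; auto. intro Hc. apply Hh. lra.
Qed.

Lemma joint_cont (I J : R -> Prop) (f fx fxx fl : R -> R -> R) l0 e :
  C1_family_of_C2_maps I J f fx fxx fl -> 0 < e ->
  (forall l, Rabs (l - l0) < e -> J l) ->
  forall x, I x -> forall eps, 0 < eps -> exists d, 0 < d /\
    forall y m, I y -> J m -> Rabs (y - x) < d -> Rabs (m - l0) < d ->
      Rabs (f y m - f x l0) < eps.
Proof.
  intros [Hfx [Hfl [Cfx [Cfl _]]]] He HJ x Ix eps Heps.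
  assert (Jl0 : J l0) by (apply HJ; rewrite Rminus_diag, Rabs_R0; auto).
  destruct (Cfl x l0 Ix Jl0 1 Rlt_0_1) as [d1 [Hd1 H1]].
  set (B := Rabs (fl x l0) + 1).
  assert (HB : 0 < B) by (unfold B; pose proof (Rabs_pos (fl x l0)); lra).
  destruct (cont_of_deriv _ _ _ _ (Hfx x l0 Ix Jl0) (eps/2)) as [d2 [Hd2 H2]]; [lra|].
  exists (Rmin (Rmin d1 e) (Rmin d2 (eps / (2 * B)))).
  split. { repeat apply Rmin_pos; auto. apply Rdiv_lt_0_compat; lra. }
  intros y m Iy Jm Hy Hm.
  assert (Hm1 : Rabs (m - l0) < d1) by (eapply Rlt_le_trans; [apply Hm|];
    eapply Rle_trans; [apply Rmin_l|apply Rmin_l]).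
  assert (Hm2 : Rabs (m - l0) < e) by (eapply Rlt_le_trans; [apply Hm|];
    eapply Rle_trans; [apply Rmin_l|apply Rmin_r]).
  assert (Hm3 : Rabs (m - l0) < eps / (2 * B)) by (eapply Rlt_le_trans; [apply Hm|];
    eapply Rle_trans; [apply Rmin_r|apply Rmin_r]).
  assert (Hy1 : Rabs (y - x) < d1) by (eapply Rlt_le_trans; [apply Hy|];
    eapply Rle_trans; [apply Rmin_l|apply Rmin_l]).
  assert (Hy2 : Rabs (y - x) < d2) by (eapply Rlt_le_trans; [apply Hy|];
    eapply Rle_trans; [apply Rmin_r|apply Rmin_l]).
  assert (Hvar : Rabs (f y m - f y l0) <= B * Rabs (m - l0)).
  { assert (Hder : forall c, Rabs (c - l0) <= Rabs (m - l0) ->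
        derivable_pt_lim (fun k => f y k) c (fl y c) /\ Rabs (fl y c) <= B).
    { intros c Hc. assert (Jc : J c) by (apply HJ; lra). split.
      - apply deriv_interior with J. apply Hfl; auto.
        exists (e - Rabs (c - l0)). split; [lra|]. intros z Hz. apply HJ.
        replace (z - l0) with ((z - c) + (c - l0)) by ring.
        eapply Rle_lt_trans; [apply Rabs_triang|]. lra.
      - specialize (H1 y c Iy Jc Hy1 ltac:(lra)).
        replace (fl y c) with ((fl y c - fl x l0) + fl x l0) by ring.
        unfold B. eapply Rle_trans; [apply Rabs_triang|]. lra. }
    destruct (Req_dec m l0) as [->|Hne].
    { rewrite !Rminus_diag, Rabs_R0, Rmult_0_r. lra. }
    destruct (Rlt_or_le l0 m) as [Hlt|Hle].
    - destruct (MVT_cor2 (fun k => f y k) (fl y) l0 m Hlt) as [c [Ec Hc]].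
      { intros c Hc. apply Hder. rewrite !Rabs_pos_eq; lra. }
      simpl in Ec. rewrite Ec, Rabs_mult.
      assert (Rabs (fl y c) <= B) by (apply Hder; rewrite !Rabs_pos_eq; lra).
      rewrite (Rabs_pos_eq (m - l0)) by lra. pose proof (Rabs_pos (fl y c)). nra.
    - assert (Hlt : m < l0) by lra.
      destruct (MVT_cor2 (fun k => f y k) (fl y) m l0 Hlt) as [c [Ec Hc]].
      { intros c Hc. apply Hder. rewrite Rabs_left1 by lra.
        unfold Rabs; destruct Rcase_abs; lra. }
      simpl in Ec.
      replace (f y m - f y l0) with (- (f y l0 - f y m)) by ring.
      rewrite Rabs_Ropp, Ec, Rabs_mult.
      assert (Rabs (fl y c) <= B).
      { apply Hder. rewrite (Rabs_left1 (m - l0)) by lra. unfold Rabs; destruct Rcase_abs; lra. }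
      rewrite (Rabs_pos_eq (l0 - m)) by lra. rewrite (Rabs_left1 (m - l0)) by lra.
      pose proof (Rabs_pos (fl y c)). nra. }
  assert (Hx2 : Rabs (f y l0 - f x l0) < eps / 2) by (apply H2; auto).
  assert (B * Rabs (m - l0) < eps / 2).
  { apply Rmult_lt_reg_r with (/ B). apply Rinv_0_lt_compat; auto.
    replace (B * Rabs (m - l0) * / B) with (Rabs (m - l0)) by (field; lra).
    replace (eps / 2 * / B) with (eps / (2 * B)) by (field; lra). auto. }
  replace (f y m - f x l0) with ((f y m - f y l0) + (f y l0 - f x l0)) by ring.
  eapply Rle_lt_trans; [apply Rabs_triang|]. lra.
Qed.

Lemma iter_lam (I J : R -> Prop) (f fx fxx fl : R -> R -> R) l0 e :
  C1_family_of_C2_maps I J f fx fxx fl -> 0 < e ->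
  (forall l, Rabs (l - l0) < e -> J l) ->
  (forall x l, I x -> J l -> I (f x l)) ->
  forall k t, I t -> forall eps, 0 < eps -> exists d, 0 < d /\
    forall m, J m -> Rabs (m - l0) < d ->
      Rabs (Nat.iter k (fun v => f v m) t - Nat.iter k (fun v => f v l0) t) < eps.
Proof.
  intros H1 He HJ Hmap k; induction k; intros t It eps Heps.
  - exists 1. split; [lra|]. intros m _ _. simpl. rewrite Rminus_diag, Rabs_R0; auto.
  - assert (Jl0 : J l0) by (apply HJ; rewrite Rminus_diag, Rabs_R0; auto).
    assert (Ik : I (Nat.iter k (fun v => f v l0) t)).
    { apply iter_in; auto. }
    destruct (joint_cont I J f fx fxx fl l0 e H1 He HJ _ Ik eps Heps) as [d1 [Hd1 Hj]].
    destruct (IHk t It d1 Hd1) as [d2 [Hd2 H2]].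
    exists (Rmin d1 d2). split; [apply Rmin_pos; auto|].
    intros m Jm Hm. simpl. apply Hj; auto.
    + apply iter_in; auto.
    + apply H2; auto. eapply Rlt_le_trans; [apply Hm|apply Rmin_r].
    + eapply Rlt_le_trans; [apply Hm|apply Rmin_l].
Qed.

Definition sb a b x := Rmin a b < x < Rmax a b.

Ltac crush := unfold sb, btw, Rmin, Rmax in *; repeat destruct Rle_dec;
  unfold Rabs in *; repeat destruct Rcase_abs; lra.

Lemma approach a b d : a <> b -> 0 < d -> exists p, sb a b p /\ Rabs (p - a) < d.
Proof.
  intros Hab Hd. destruct (Rlt_or_le a b) as [H|H].
  - exists (a + Rmin (d/2) ((b - a)/2)).
    assert (0 < Rmin (d/2) ((b-a)/2)) by (apply Rmin_pos; lra).
    pose proof (Rmin_l (d/2) ((b-a)/2)). pose proof (Rmin_r (d/2) ((b-a)/2)).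
    split; crush.
  - exists (a - Rmin (d/2) ((a - b)/2)).
    assert (0 < Rmin (d/2) ((a-b)/2)) by (apply Rmin_pos; lra).
    pose proof (Rmin_l (d/2) ((a-b)/2)). pose proof (Rmin_r (d/2) ((a-b)/2)).
    split; crush.
Qed.

Lemma sb_sym a b x : sb a b x -> sb b a x.
Proof. crush. Qed.

Lemma sb_neq a b x : sb a b x -> x <> a /\ x <> b.
Proof. crush. Qed.

Lemma sb_in (I : R -> Prop) a b x : is_interval I -> I a -> I b -> sb a b x -> I x.
Proof.
  intros HI Ia Ib H. destruct (Rle_dec a b).
  - apply (HI a b); auto. crush.
  - apply (HI b a); auto. crush.
Qed.

Lemma btw_in (I : R -> Prop) a b x : is_interval I -> I a -> I b -> btw a b x -> I x.
Proof.
  intros HI Ia Ib H. destruct (Rle_dec a b).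
  - apply (HI a b); auto. crush.
  - apply (HI b a); auto. crush.
Qed.

Lemma G4 w x0 w' t1 : sb w x0 w' -> btw w w' t1 -> t1 <> w -> sb x0 w t1.
Proof. crush. Qed.

Lemma btw_close a b x c d : btw a b x -> Rabs (a - c) < d -> Rabs (b - c) < d -> Rabs (x - c) < d.
Proof. crush. Qed.

Lemma G2 x0 A1 A2 u p0 : sb x0 A1 u -> sb x0 u p0 -> Rabs (A2 - x0) < Rabs (p0 - x0) ->
  sb A1 A2 p0 /\ sb A1 A2 u.
Proof. intros; split; crush. Qed.

Lemma G3 x0 w t1 t2 B0 : sb x0 w t1 -> sb t1 w t2 -> Rabs (B0 - x0) < Rabs (t1 - x0) ->
  (B0 < Rmin t1 t2 /\ Rmax t1 t2 < w) \/ (w < Rmin t1 t2 /\ Rmax t1 t2 < B0).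
Proof. intros. destruct (Rlt_or_le x0 w); [left|right]; crush. Qed.

Lemma P1 A1 A2 A1' A2' p : sb A1 A2 p -> Rabs (A1' - A1) < Rabs (p - A1) ->
  Rabs (A2' - A2) < Rabs (p - A2) -> btw A1' A2' p.
Proof. crush. Qed.

Lemma P2 t1 t2 B0 W B0' W' :
  (B0 < Rmin t1 t2 /\ Rmax t1 t2 < W) \/ (W < Rmin t1 t2 /\ Rmax t1 t2 < B0) ->
  Rabs (B0' - B0) < Rabs (B0 - t1) -> Rabs (B0' - B0) < Rabs (B0 - t2) ->
  Rabs (W' - W) < Rabs (W - t1) -> Rabs (W' - W) < Rabs (W - t2) ->
  (B0' < Rmin t1 t2 /\ Rmax t1 t2 < W') \/ (W' < Rmin t1 t2 /\ Rmax t1 t2 < B0').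
Proof. intros [H|H] ? ? ? ?; [left|right]; crush. Qed.

Lemma periodic_cr (I : R -> Prop) F s N : (forall t, I t -> I (F t)) -> I s -> (0 < N)%nat ->
  Nat.iter N F s = s -> chain_recurrent I F s.
Proof.
  intros HF Is HN Hp. split; auto. intros eps He.
  exists N, (fun k => Nat.iter k F s). split; [exact HN|]. split; [reflexivity|]. split; [exact Hp|].
  split. { intros; apply iter_in; auto. }
  intros k Hk. destruct k; [lia|]. replace (S k - 1)%nat with k by lia. simpl.
  rewrite Rminus_diag, Rabs_R0; auto.
Qed.

Lemma iter_fix (F : R -> R) (x : R) k : F x = x -> Nat.iter k F x = x.
Proof. intros H; induction k; simpl; auto. rewrite IHk; auto. Qed.

Theorem mainTheorem5
  (I J : R -> Prop) (f fx fxx fl : R -> R -> R) (l0 : R) (xs : R -> R) (y w : R)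
  (HI : is_interval I) (HIn : nondegenerate I)
  (HJ : is_interval J) (HJn : nondegenerate J)
  (Hl0 : exists e, 0 < e /\ forall l, Rabs (l - l0) < e -> J l)
  (Hmap : forall x l, I x -> J l -> I (f x l))
  (H1 : C1_family_of_C2_maps I J f fx fxx fl)
  (H2 : not_constant_on_any_interval I (fun x => f x l0))
  (H3 : H3_condition I J f fx l0)
  (H4 : forall l, J l -> repelling_fixed_pt I (fun x => f x l) (fun x => fx x l) (xs l))
  (H4y : homoclinic_pt I (fun x => f x l0) (xs l0) y)
  (H5 : forall z : nat -> R, homoclinic_orbit I (fun x => f x l0) (xs l0) z ->
          (exists K : nat, z K = y) ->
          exists c, fx c l0 = 0 /\ (exists k : nat, z k = c) /\
            forall c', fx c' l0 = 0 -> (exists k : nat, z k = c') -> c' = c)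
  (H6 : homoclinic_tangency_pt I (fun x => f x l0) (fun x => fx x l0) (xs l0) w)
  (Hpos : 0 < fx (xs l0) l0)
  (Hw : U_right I (fun x => f x l0) (xs l0) w /\ U_left I (fun x => f x l0) (xs l0) w) :
  ~ chain_explosion_point I J f l0 w.
Proof.
  intros [_ [delta [eps [Hd [He Hside]]]]].
  destruct Hl0 as [e [He0 HJe]].
  assert (Jl0 : J l0) by (apply HJe; rewrite Rminus_diag, Rabs_R0; auto).
  set (F0 := fun x => f x l0) in *.
  set (x0 := xs l0) in *.
  destruct (H4 l0 Jl0) as [Ix0 [Fx0 _]]. fold F0 x0 in Fx0.
  destruct H6 as [z [L [[Hz0 [_ [Iz [Hzs _]]]] [HzL Hfw]]]].
  simpl in Hfw.
  assert (Iw : I w) by (rewrite <- HzL; apply Iz).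
  assert (Hzk : forall k, Nat.iter k F0 (z k) = x0).
  { induction k; [simpl; rewrite Hz0; reflexivity|]. rewrite Nat.iter_succ_r. unfold F0 in *. rewrite Hzs. auto. }
  assert (HwL : Nat.iter L F0 w = x0) by (rewrite <- HzL; apply Hzk).
  assert (Hwx : w <> x0) by (intro Hc; rewrite Hc in Hfw; lra).
  assert (HL : (0 < L)%nat) by (destruct L; [rewrite Hz0 in HzL; congruence| lia]).
  assert (HF0 : forall t, I t -> I (F0 t)) by (intros; apply Hmap; auto).
  destruct H1 as [Hfx Hrest].
  assert (HC : forall l, J l -> forall t, I t -> continuous_within I (fun x => f x l) t).
  { intros l Jl t It. apply cont_of_deriv with (fx t l). apply Hfx; auto. }
  assert (HC0 : forall t, I t -> continuous_within I F0 t) by (apply HC; auto).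
  destruct (approach w x0 delta Hwx Hd) as [w' [Hw' Hw'd]].
  assert (Iw' : I w') by (apply (sb_in I w x0); auto).
  destruct (sb_neq _ _ _ Hw') as [Hw'w _].
  assert (Hlt : Rmin w w' < Rmax w w') by (unfold Rmin, Rmax; destruct Rle_dec; lra).
  assert (Hin : forall x, Rmin w w' <= x <= Rmax w w' -> I x)
    by (intros; apply (btw_in I w w'); auto).
  destruct (nonconst_iter I F0 HI HF0 HC0 H2 L _ _ Hlt Hin) as [x1 [x2 [Hx1 [Hx2 Hne]]]].
  assert (Ht1 : exists t1, btw w w' t1 /\ Nat.iter L F0 t1 <> x0).
  { destruct (Req_dec (Nat.iter L F0 x1) x0) as [E|E].
    - exists x2. split; auto. rewrite <- E. auto.
    - exists x1. split; auto. }
  destruct Ht1 as [t1 [Bt1 HA1]].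
  assert (It1 : I t1) by (apply (btw_in I w w'); auto).
  assert (Ht1w : t1 <> w) by (intro Hc; rewrite Hc in HA1; auto).
  assert (Sb1 : sb x0 w t1) by (apply (G4 w x0 w'); auto).
  assert (Ht1d : Rabs (t1 - w) < delta).
  { apply (btw_close w w' t1 w delta); auto. rewrite Rminus_diag, Rabs_R0; auto. }
  set (A1 := Nat.iter L F0 t1) in *.
  assert (Hu : exists (n : nat) u, I u /\ sb x0 A1 u /\ Nat.iter n F0 u = w).
  { destruct Hw as [Hr Hl]. destruct (Rlt_or_le x0 A1) as [Hc|Hc].
    - destruct (Hr (A1 - x0)) as [n [u [Iu [Hu1 Hu2]]]]; [lra|].
      exists n, u. split; auto. split; auto. unfold sb, Rmin, Rmax; destruct Rle_dec; lra.
    - destruct (Hl (x0 - A1)) as [n [u [Iu [Hu1 Hu2]]]]; [lra|].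
      exists n, u. split; auto. split; auto. unfold sb, Rmin, Rmax; destruct Rle_dec; lra. }
  destruct Hu as [n [u [Iu [Sbu Hnu]]]].
  destruct (sb_neq _ _ _ Sbu) as [Hux0 _].
  assert (Ht1x0 : 0 < Rabs (t1 - x0)).
  { destruct (sb_neq _ _ _ Sb1). apply Rabs_pos_lt. lra. }
  destruct (iter_cont I F0 HF0 HC0 n x0 Ix0 _ Ht1x0) as [d1 [Hd1 Hc1]].
  destruct (approach x0 u d1) as [p0 [Sbp Hpd]]; [intro Hc; apply Hux0; auto|auto|].
  assert (Ip0 : I p0) by (apply (sb_in I x0 u); auto).
  assert (HB0 : Rabs (Nat.iter n F0 p0 - x0) < Rabs (t1 - x0)).
  { specialize (Hc1 p0 Ip0 Hpd). rewrite (iter_fix F0 x0 n Fx0) in Hc1. exact Hc1. }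
  assert (Hp0x0 : 0 < Rabs (p0 - x0)).
  { destruct (sb_neq _ _ _ Sbp). apply Rabs_pos_lt. lra. }
  destruct (iter_cont I F0 HF0 HC0 L w Iw _ Hp0x0) as [d2 [Hd2 Hc2]].
  destruct (approach w t1 d2) as [t2 [Sbt2 Ht2d]]; [intro Hc; apply Ht1w; auto|auto|].
  assert (It2 : I t2) by (apply (sb_in I w t1); auto).
  assert (HA2 : Rabs (Nat.iter L F0 t2 - x0) < Rabs (p0 - x0)).
  { specialize (Hc2 t2 It2 Ht2d). rewrite HwL in Hc2. auto. }
  set (A2 := Nat.iter L F0 t2) in *.
  set (B0 := Nat.iter n F0 p0) in *.
  destruct (G2 x0 A1 A2 u p0 Sbu Sbp HA2) as [SbA1 SbA2].
  assert (Hside0 := G3 x0 w t1 t2 B0 Sb1 (sb_sym _ _ _ Sbt2) HB0).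
  assert (Ht2d' : Rabs (t2 - w) < delta).
  { unfold sb, Rmin, Rmax in Sbt2. destruct Rle_dec; unfold Rabs in *;
    repeat destruct Rcase_abs; lra. }
  assert (Hpos1 : 0 < Rmin (Rabs (p0 - A1)) (Rabs (u - A1))).
  { destruct (sb_neq _ _ _ SbA1), (sb_neq _ _ _ SbA2).
    apply Rmin_pos; apply Rabs_pos_lt; lra. }
  assert (Hpos2 : 0 < Rmin (Rabs (p0 - A2)) (Rabs (u - A2))).
  { destruct (sb_neq _ _ _ SbA1), (sb_neq _ _ _ SbA2).
    apply Rmin_pos; apply Rabs_pos_lt; lra. }
  assert (Hpos3 : 0 < Rmin (Rabs (B0 - t1)) (Rabs (B0 - t2))).
  { apply Rmin_pos; apply Rabs_pos_lt; unfold Rmin, Rmax in Hside0;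
    destruct Rle_dec; lra. }
  assert (Hpos4 : 0 < Rmin (Rabs (w - t1)) (Rabs (w - t2))).
  { apply Rmin_pos; apply Rabs_pos_lt; unfold Rmin, Rmax in Hside0;
    destruct Rle_dec; lra. }
  assert (H1' : C1_family_of_C2_maps I J f fx fxx fl) by (split; auto).
  destruct (iter_lam I J f fx fxx fl l0 e H1' He0 HJe Hmap L t1 It1 _ Hpos1) as [g1 [Hg1 E1]].
  destruct (iter_lam I J f fx fxx fl l0 e H1' He0 HJe Hmap L t2 It2 _ Hpos2) as [g2 [Hg2 E2]].
  destruct (iter_lam I J f fx fxx fl l0 e H1' He0 HJe Hmap n p0 Ip0 _ Hpos3) as [g3 [Hg3 E3]].
  destruct (iter_lam I J f fx fxx fl l0 e H1' He0 HJe Hmap n u Iu _ Hpos4) as [g4 [Hg4 E4]].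
  set (g := Rmin (Rmin g1 g2) (Rmin g3 g4)).
  assert (Hg : 0 < g) by (unfold g; repeat apply Rmin_pos; auto).
  assert (KEY : forall l, J l -> Rabs (l - l0) < g ->
            exists s, Rabs (s - w) < delta /\ chain_recurrent I (fun v => f v l) s).
  { intros l Jl Hl.
    assert (Hl1 : Rabs (l - l0) < g1) by (eapply Rlt_le_trans; [apply Hl|];
      unfold g; eapply Rle_trans; [apply Rmin_l|apply Rmin_l]).
    assert (Hl2 : Rabs (l - l0) < g2) by (eapply Rlt_le_trans; [apply Hl|];
      unfold g; eapply Rle_trans; [apply Rmin_l|apply Rmin_r]).
    assert (Hl3 : Rabs (l - l0) < g3) by (eapply Rlt_le_trans; [apply Hl|];
      unfold g; eapply Rle_trans; [apply Rmin_r|apply Rmin_l]).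
    assert (Hl4 : Rabs (l - l0) < g4) by (eapply Rlt_le_trans; [apply Hl|];
      unfold g; eapply Rle_trans; [apply Rmin_r|apply Rmin_r]).
    specialize (E1 l Jl Hl1). specialize (E2 l Jl Hl2).
    specialize (E3 l Jl Hl3). specialize (E4 l Jl Hl4).
    fold F0 in E1, E2, E3, E4. fold A1 in E1. fold A2 in E2. fold B0 in E3.
    rewrite Hnu in E4.
    set (Fl := fun v => f v l) in *.
    assert (Bp : btw (Nat.iter L Fl t1) (Nat.iter L Fl t2) p0).
    { apply (P1 A1 A2); auto.
      - eapply Rlt_le_trans; [apply E1|apply Rmin_l].
      - eapply Rlt_le_trans; [apply E2|apply Rmin_l]. }
    assert (Bu : btw (Nat.iter L Fl t1) (Nat.iter L Fl t2) u).
    { apply (P1 A1 A2); auto.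
      - eapply Rlt_le_trans; [apply E1|apply Rmin_r].
      - eapply Rlt_le_trans; [apply E2|apply Rmin_r]. }
    assert (Sd := P2 t1 t2 B0 w (Nat.iter n Fl p0) (Nat.iter n Fl u) Hside0
      ltac:(eapply Rlt_le_trans; [apply E3|apply Rmin_l])
      ltac:(eapply Rlt_le_trans; [apply E3|apply Rmin_r])
      ltac:(eapply Rlt_le_trans; [apply E4|apply Rmin_l])
      ltac:(eapply Rlt_le_trans; [apply E4|apply Rmin_r])).
    assert (HFl : forall t, I t -> I (Fl t)) by (intros; apply Hmap; auto).
    destruct (core I Fl HI HFl (HC l Jl) L n t1 t2 p0 u It1 It2 Ip0 Iu Bp Bu Sd)
      as [s [Bs Es]].
    exists s. split.
    - apply (btw_close t1 t2 s w delta); auto.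
    - apply periodic_cr with (n + L)%nat; auto.
      + apply (btw_in I t1 t2); auto.
      + lia. }
  set (lam := Rmin eps (Rmin g e) / 2).
  assert (Hlam : 0 < lam) by (unfold lam; assert (0 < Rmin eps (Rmin g e)) by (repeat apply Rmin_pos; lra); lra).
  assert (Hlam1 : lam < eps) by (unfold lam; pose proof (Rmin_l eps (Rmin g e)); lra).
  assert (Hlam2 : lam < g) by (unfold lam; pose proof (Rmin_r eps (Rmin g e));
    pose proof (Rmin_l g e); lra).
  assert (Hlam3 : lam < e) by (unfold lam; pose proof (Rmin_r eps (Rmin g e));
    pose proof (Rmin_r g e); lra).
  destruct Hside as [Hs|Hs].
  - assert (Jl : J (l0 + lam)) by (apply HJe; replace (l0 + lam - l0) with lam by ring;
      rewrite Rabs_pos_eq; lra).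
    destruct (KEY (l0 + lam) Jl) as [s [Hsd Hcr]].
    { replace (l0 + lam - l0) with lam by ring. rewrite Rabs_pos_eq; lra. }
    apply (Hs (l0 + lam) Jl ltac:(lra) s Hsd Hcr).
  - assert (Jl : J (l0 - lam)) by (apply HJe; replace (l0 - lam - l0) with (- lam) by ring;
      rewrite Rabs_Ropp, Rabs_pos_eq; lra).
    destruct (KEY (l0 - lam) Jl) as [s [Hsd Hcr]].
    { replace (l0 - lam - l0) with (- lam) by ring. rewrite Rabs_Ropp, Rabs_pos_eq; lra. }
    apply (Hs (l0 - lam) Jl ltac:(lra) s Hsd Hcr).
Qed.
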